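(* Let $\varphi:\mathbb{R}^n\to\mathbb{R}$ be upper-$\mathcal{C}^2$ on $\mathbb{R}^n$. Given any $\sigma\in{]0,1[}$ and $x,w,d\in\mathbb{R}^n$ such that $w\in\partial\varphi(x)$ and $\langle w,d\rangle<0$, there exists $\eta>0$ such that $$\varphi(x + \tau d) \leq \varphi(x) + \sigma \tau \langle w,d\rangle\quad\text{for all } \tau \in{]0,\eta[}.$$
   Context: A function $\varphi:\mathbb{R}^n\to\mathbb{R}$ is upper-$\mathcal{C}^2$ on $\mathbb{R}^n$ if on some neighborhood $V$ of each $\bar x\in\mathbb{R}^n$ there is a representation $\varphi(x)=\min_{c\in C}\varphi_c(x)$, where $C$ is a compact set (in some topological space), each $\varphi_c$ is of class $\mathcal{C}^2$ on $V$, and $\varphi_c(x)$ together with its first- and second-order partial derivatives depend continuously on $(x,c)\in V\times C$. Such functions are locally Lipschitz. $\partial\varphi(x)$ denotes the Clarke subdifferential: $\partial\varphi(x)=\{v:\langle v,h\rangle\le\varphi^\circ(x;h)\ \forall h\}$ with $\varphi^\circ(x;h)=\limsup_{y\to x,\,t\to0^+}\frac{\varphi(y+th)-\varphi(y)}{t}$. *)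

(* Defs.v *)
(* R^n is modelled as 'rV[R]_n for R : realType. *)
From HB Require Import structures.
From mathcomp Require Import all_boot all_order all_algebra.
From mathcomp Require Import all_classical all_reals all_analysis.
Set Implicit Arguments. Unset Strict Implicit. Unset Printing Implicit Defensive.
Import Order.TTheory GRing.Theory Num.Theory.
Import numFieldNormedType.Exports.
Local Open Scope classical_set_scope.
Local Open Scope ring_scope.

Definition dotp {R : realType} {n : nat} (u v : 'rV[R]_n) : R :=
  \sum_(i < n) u 0 i * v 0 i.

Definition ebasis {R : realType} {n : nat} (i : 'I_n) : 'rV[R]_n := delta_mx 0 i.

Definition partial1 {R : realType} {n : nat} (f : 'rV[R]_n -> R) (i : 'I_n)
  (x : 'rV[R]_n) : R := 'D_(ebasis i) f x.

Definition partial2 {R : realType} {n : nat} (f : 'rV[R]_n -> R) (i j : 'I_n)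
  (x : 'rV[R]_n) : R := 'D_(ebasis j) (partial1 f i) x.

Definition C2_on {R : realType} {n : nat} (f : 'rV[R]_n -> R) (V : set 'rV[R]_n) : Prop :=
  [/\ forall x, V x -> forall i, derivable f x (ebasis i),
      forall x, V x -> forall i j, derivable (partial1 f i) x (ebasis j),
      {within V, continuous f},
      forall i, {within V, continuous (partial1 f i)} &
      forall i j, {within V, continuous (partial2 f i j)}].

Definition upper_C2 {R : realType} {n : nat} (phi : 'rV[R]_n -> R) : Prop :=
  forall xbar : 'rV[R]_n,
  exists (T : topologicalType) (C : set T) (V : set 'rV[R]_n)
         (F : T -> 'rV[R]_n -> R),
  [/\ open V, V xbar, compact C &
   [/\
      (forall x, V x -> (exists2 c, C c & phi x = F c x) /\
                        (forall c, C c -> phi x <= F c x)),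
      (forall c, C c -> C2_on (F c) V),
      {within V `*` C, continuous (fun p : 'rV[R]_n * T => F p.2 p.1)},
      (forall i, {within V `*` C,
          continuous (fun p : 'rV[R]_n * T => partial1 (F p.2) i p.1)}) &
      (forall i j, {within V `*` C,
          continuous (fun p : 'rV[R]_n * T => partial2 (F p.2) i j p.1)})]].

Definition clarke_dd {R : realType} {n : nat} (phi : 'rV[R]_n -> R)
  (x h : 'rV[R]_n) : \bar R :=
  limf_esup (fun p : 'rV[R]_n * R => ((phi (p.1 + p.2 *: h) - phi p.1) / p.2)%:E)
            (filter_prod (nbhs x) (0^'+)).

Definition clarke_subdiff {R : realType} {n : nat} (phi : 'rV[R]_n -> R)
  (x : 'rV[R]_n) : set 'rV[R]_n :=
  [set v | forall h : 'rV[R]_n, ((dotp v h)%:E <= clarke_dd phi x h)%E].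

(* Main.v *)
Require Import Defs.
From HB Require Import structures.
From mathcomp Require Import all_boot all_order all_algebra.
From mathcomp Require Import all_classical all_reals all_analysis.
From mathcomp Require Import ring lra.
Set Implicit Arguments. Unset Strict Implicit. Unset Printing Implicit Defensive.
Import Order.TTheory GRing.Theory Num.Theory.
Import numFieldNormedType.Exports.
Local Open Scope classical_set_scope.
Local Open Scope ring_scope.

Section MV.
Context {R : realType} {n : nat}.
Lemma line_deriv (f : 'rV[R]_n -> R) (p e : 'rV[R]_n) (c : R) :
  derivable (fun s : R => f (p + s *: e)) c 1 = derivable f (p + c *: e) e /\
  'D_1 (fun s : R => f (p + s *: e)) c = 'D_e f (p + c *: e).
Proof.
have E : (fun h : R => h^-1 *: (((fun s : R => f (p + s *: e)) \o shift c) (h *: 1) - f (p + c *: e)))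
  = (fun h : R => h^-1 *: ((f \o shift (p + c *: e)) (h *: e) - f (p + c *: e))).
  apply: funext => h /=. rewrite /shift /=.
  by rewrite -[h%:A]/(h * 1) mulr1 scalerDl addrCA.
by rewrite /derivable /derive /= E.
Qed.

Lemma mv_seg (g : R -> R) (a b L eps : R) : a <= b ->
  (forall s, a <= s <= b -> derivable g s 1 /\ `|'D_1 g s - L| <= eps) ->
  `|g b - g a - (b - a) * L| <= eps * (b - a).
Proof.
move=> ab H.
have [c cab ->] : exists2 c, c \in `[a, b] & g b - g a = 'D_1 g c * (b - a).
  apply: MVT_segment => //.
    move=> x; rewrite in_itv /= => /andP[ax xb]; apply: derivableP.
    by have /H[] : a <= x <= b by rewrite !ltW.
  have := (@derivable_within_continuous R R g `[a, b]); apply.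
  by move=> x; rewrite in_itv /= => /H[].
rewrite [(b - a) * L]mulrC -mulrBl normrM (ger0_norm (x := b - a)) ?subr_ge0 //.
apply: ler_wpM2r; first by rewrite subr_ge0.
by move: cab; rewrite in_itv /= => /H [].
Qed.
Lemma mv_coord (f : 'rV[R]_n -> R) (p e : 'rV[R]_n) (s0 L eps : R) :
  (forall s, `|s| <= `|s0| -> derivable f (p + s *: e) e /\
                               `|'D_e f (p + s *: e) - L| <= eps) ->
  `|f (p + s0 *: e) - f p - s0 * L| <= eps * `|s0|.
Proof.
move=> H; pose g := fun s : R => f (p + s *: e).
have Hg s : `|s| <= `|s0| -> derivable g s 1 /\ `|'D_1 g s - L| <= eps.
  by move=> /H; case: (line_deriv f p e s) => -> ->.
have g0 : g 0 = f p by rewrite /g scale0r addr0.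
have [s0ge|s0lt] := leP 0 s0.
  have := mv_seg (g := g) (L := L) (eps := eps) s0ge.
  rewrite g0 subr0 (ger0_norm s0ge); apply => s /andP[hs0 ss0]; apply: Hg.
  by rewrite !ger0_norm ?(le_trans hs0).
have := mv_seg (g := g) (L := L) (eps := eps) (ltW s0lt).
rewrite g0 sub0r (ltr0_norm s0lt) => Hs.
have -> : f (p + s0 *: e) - f p - s0 * L = - (f p - g s0 - - s0 * L).
  by rewrite /g; ring.
rewrite normrN; apply: Hs => s /andP[ss0 hs0]; apply: Hg.
by rewrite (ler0_norm hs0) (ltr0_norm s0lt) lerN2.
Qed.
Lemma stair (f : 'rV[R]_n -> R) (x0 h : 'rV[R]_n) (D : 'I_n -> R) (r1 eps t : R)
  (Hb : forall y, `|y - x0| < r1 -> forall i, derivable f y (ebasis i) /\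
          `|'D_(ebasis i) f y - D i| <= eps) :
  forall (l : seq 'I_n) z,
  `|z - x0| + `|t| * \sum_(i <- l) `|h 0 i| * `|ebasis i : 'rV[R]_n| < r1 ->
  `|f (z + t *: \sum_(i <- l) h 0 i *: ebasis i) - f z - t * \sum_(i <- l) h 0 i * D i|
     <= eps * (`|t| * \sum_(i <- l) `|h 0 i|).
Proof.
elim=> [|o l IH] z Hz.
  by rewrite !big_nil scaler0 addr0 subrr mulr0 sub0r normrN normr0 !mulr0.
move: Hz; rewrite !big_cons => Hz.
set S := \sum_(i <- l) `|h 0 i| * `|ebasis i : 'rV[R]_n|.
have S0 : 0 <= S by apply: sumr_ge0 => i _; rewrite mulr_ge0.
set z' := z + (t * h 0 o) *: ebasis o.
have Ho : `|z - x0| + `|t * h 0 o| * `|ebasis o : 'rV[R]_n| + `|t| * S < r1.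
  by rewrite normrM -mulrA -addrA -mulrDr.
have -> : z + t *: (h 0 o *: ebasis o + \sum_(i <- l) h 0 i *: ebasis i)
   = z' + t *: \sum_(i <- l) h 0 i *: ebasis i.
  by rewrite scalerDr scalerA addrA.
have -> : f (z' + t *: \sum_(i <- l) h 0 i *: ebasis i) - f z - t * (h 0 o * D o + \sum_(i <- l) h 0 i * D i)
  = (f (z' + t *: \sum_(i <- l) h 0 i *: ebasis i) - f z' - t * \sum_(i <- l) h 0 i * D i)
    + (f z' - f z - (t * h 0 o) * D o) by ring.
apply: (le_trans (ler_normD _ _)).
have -> : eps * (`|t| * (`|h 0 o| + \sum_(i <- l) `|h 0 i|)) =
   eps * (`|t| * \sum_(i <- l) `|h 0 i|) + eps * `|t * h 0 o| by rewrite normrM; ring.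
apply: lerD.
  apply: IH; apply: le_lt_trans Ho; apply: lerD => //.
  rewrite /z' addrAC; apply: (le_trans (ler_normD _ _)).
  by rewrite normrZ lerD2l.
apply: mv_coord => s hs; apply: Hb.
apply: le_lt_trans Ho.
rewrite addrAC; apply: (le_trans (ler_normD _ _)).
rewrite -addrA lerD2l normrZ -[X in X <= _]addr0; apply: lerD.
  by apply: ler_wpM2r.
by rewrite mulr_ge0.
Qed.
Lemma approx (T : topologicalType) (C : set T) (V : set 'rV[R]_n) (F : T -> 'rV[R]_n -> R)
  (oV : open V) (HC2 : forall c, C c -> C2_on (F c) V)
  (Hpc : forall i, {within V `*` C, continuous (fun p : 'rV[R]_n * T => partial1 (F p.2) i p.1)})
  x0 c0 (Vx0 : V x0) (Cc0 : C c0) (h : 'rV[R]_n) (eps : R) (eps0 : 0 < eps) :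
  exists2 W, nbhs c0 W & exists2 r, 0 < r & forall c z t, W c -> C c -> `|z - x0| < r -> `|t| < r ->
   `|F c (z + t *: h) - F c z - t * \sum_(i < n) h 0 i * partial1 (F c0) i x0| <= eps * `|t|.
Proof.
set K := \sum_(i < n) `|h 0 i|.
have K0 : 0 <= K by apply: sumr_ge0.
set eps' := eps / (K + 1).
have eps'0 : 0 < eps' by rewrite divr_gt0 // ltr_pwDr.
have Hi : forall i, \forall p \near (x0, c0), (V p.1 /\ C p.2) ->
    `|partial1 (F c0) i x0 - partial1 (F p.2) i p.1| < eps'.
  move=> i; have /subspace_continuousP /(_ (x0, c0)) := Hpc i.
  move=> /(_ (conj Vx0 Cc0)) /cvgrPdist_lt /(_ eps' eps'0) H.
  have H' : nbhs (x0, c0) (fun p => (V `*` C) p ->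
    `|partial1 (F c0) i x0 - partial1 (F p.2) i p.1| < eps') := H.
  by apply: filterS H' => -[y c] /= H' [Vy Cc]; apply: H'.
have HA : \forall p \near (x0, c0), forall i, V p.1 /\ C p.2 ->
    `|partial1 (F c0) i x0 - partial1 (F p.2) i p.1| < eps'.
  by apply: (@filter_forall _ _ (fun i p => V p.1 /\ C p.2 -> `|partial1 (F c0) i x0 - partial1 (F p.2) i p.1| < eps') (nbhs (x0, c0))).
have HV : \forall p \near (x0, c0), V p.1.
  exists (V, setT) => /=; last by move=> [y c] [].
  by split; [exact: open_nbhs_nbhs | exact: filterT].
have [[A1 A2] /= [nA1 nA2] sA] := filterI HA HV.
move/nbhs_ballP: nA1 => [r1 /= r10 bA1].
set M := \sum_(i < n) `|h 0 i| * `|ebasis i : 'rV[R]_n|.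
have M0 : 0 <= M by apply: sumr_ge0 => i _; rewrite mulr_ge0.
have M1 : 0 < M + 1 by rewrite ltr_pwDr.
exists A2 => //; exists (r1 / (2 * (M + 1))).
  by rewrite divr_gt0 // mulr_gt0.
move=> c z t A2c Cc zr tr.
have Hb : forall y, `|y - x0| < r1 -> forall i, derivable (F c) y (ebasis i) /\
    `|'D_(ebasis i) (F c) y - partial1 (F c0) i x0| <= eps'.
  move=> y yr i.
  have Ay : A1 y by apply: bA1; rewrite -ball_normE /ball_ /= distrC.
  have [H1 Vy] := sA (y, c) (conj Ay A2c).
  split; first by case: (HC2 c Cc) => d1 _ _ _ _; exact: d1.
  by rewrite distrC; apply: ltW; exact: (H1 i (conj Vy Cc)).
have := @stair (F c) x0 h (fun i => partial1 (F c0) i x0) r1 eps' t Hb (index_enum 'I_n) z.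
have E : \sum_(i <- index_enum 'I_n) h 0 i *: ebasis i = h := esym (row_sum_delta h).
rewrite E => H.
have Hz : `|z - x0| + `|t| * M < r1.
  have rE : r1 / (2 * (M + 1)) * (M + 1) = r1 / 2.
    by field; rewrite gt_eqF.
  have : `|z - x0| + `|t| * M < r1 / 2.
    rewrite -rE mulrDr mulr1 addrC; apply: ler_ltD => //.
    by apply: ler_wpM2r => //; apply: ltW.
  move=> /lt_le_trans; apply; rewrite ler_pdivrMr // ler_peMr // ?ler1n //.
  exact: ltW.
apply: (le_trans (H Hz)).
rewrite mulrCA [eps * _]mulrC; apply: ler_wpM2l => //.
rewrite /eps' mulrAC ler_pdivrMr ?ltr_pwDr // ler_wpM2l ?lerDl //.
exact: ltW.
Qed.
Lemma near_line (V : set 'rV[R]_n) (x h : 'rV[R]_n) : open V -> V x ->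
  exists2 r, 0 < r & forall y t, `|y - x| < r -> `|t| < r -> V (y + t *: h).
Proof.
move=> oV Vx.
have : nbhs x V by apply: open_nbhs_nbhs.
move/nbhs_ballP => [rV /= rV0 bV].
have h1 : 0 < `|h| + 1 by rewrite ltr_pwDr.
exists (rV / (2 * (`|h| + 1))); first by rewrite divr_gt0 // mulr_gt0.
move=> y t yr tr; apply: bV; rewrite -ball_normE /ball_ /=.
have rE : rV / (2 * (`|h| + 1)) * (`|h| + 1) = rV / 2 by field; rewrite gt_eqF.
rewrite opprD addrA distrC -opprB -normrN opprK; apply: (le_lt_trans (ler_normD _ _)).
rewrite normrN normrZ [`|x - y|]distrC; apply: (@lt_le_trans _ _ (rV / 2)).
  rewrite -rE mulrDr mulr1 addrC; apply: ler_ltD => //.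
  by apply: ler_wpM2r => //; apply: ltW.
by rewrite ler_pdivrMr // ler_peMr // ?ler1n //; apply: ltW.
Qed.
End MV.

Theorem proposition4p3 (R : realType) (n : nat) (phi : 'rV[R]_n -> R)
  (Hphi : upper_C2 phi) (sigma : R) (Hsigma : 0 < sigma < 1)
  (x w d : 'rV[R]_n) (Hw : clarke_subdiff phi x w) (Hwd : dotp w d < 0) :
  exists2 eta : R, 0 < eta &
    forall tau : R, 0 < tau < eta ->
      phi (x + tau *: d) <= phi x + sigma * tau * dotp w d.
Proof.
move: Hsigma => /andP[s0 s1].
have [T [C [V [F [oV Vx cC [Hact HC2 Hcont Hpc _]]]]]] := Hphi x.
set a := - dotp w d.
have a0 : 0 < a by rewrite oppr_gt0.
have wda : dotp w d = - a by rewrite /a opprK.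
pose D c := \sum_(i < n) d 0 i * partial1 (F c) i x.
have [[c0 [Cc0 [act0 Dc0]]] | Hn] := pselect (exists c0, C c0 /\ phi x = F c0 x /\ D c0 <= - a).
  have eps0 : 0 < (1 - sigma) * a by rewrite mulr_gt0 // subr_gt0.
  have [W nW [r r0 Hr]] := approx oV HC2 Hpc Vx Cc0 d eps0.
  have [rV rV0 HV] := near_line d oV Vx.
  exists (Num.min r rV); first by rewrite lt_min r0 rV0.
  move=> tau /andP[tau0]; rewrite lt_min => /andP[taur tauV].
  have Vt : V (x + tau *: d) by apply: HV; rewrite ?subrr ?normr0 // gtr0_norm.
  apply: (le_trans (proj2 (Hact _ Vt) c0 Cc0)).
  have := Hr c0 x tau (nbhs_singleton nW) Cc0.
  rewrite subrr normr0 (gtr0_norm tau0) => /(_ r0 taur) /(le_trans (ler_norm _)) H.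
  have H2 : tau * D c0 <= tau * (- a) by rewrite ler_wpM2l // ltW.
  rewrite wda act0; move: H; rewrite -/(D c0).
  move: H2; set u := tau * D c0; set FF := F c0 (x + tau *: d); set F0 := F c0 x.
  by move=> H2 H; nra.
exfalso.
have Hneg : forall c, C c -> phi x = F c x -> - a < D c.
  by move=> c Cc e; rewrite ltNge; apply/negP => le; apply: Hn; exists c.
pose Fi : set_system (R * ('rV[R]_n * R)) := filter_prod (a^'-) (filter_prod (nbhs x) ((0:R)^'+)).
pose P (i : R * ('rV[R]_n * R)) c := C c -> phi i.2.1 = F c i.2.1 -> V i.2.1 ->
  V (i.2.1 + i.2.2 *: - d) ->
  F c (i.2.1 + i.2.2 *: - d) - F c i.2.1 <= i.2.2 * i.1.
have cov : forall c, C c -> \forall c' \near c & i \near Fi, P i c'.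
  move=> c Cc.
  suff [W nW [bc bca [rc rc0 HP]]] : exists2 W, nbhs c W & exists2 bc, bc < a &
      exists2 rc, 0 < rc & forall c' y t b, W c' -> `|y - x| < rc -> 0 < t < rc ->
      bc < b -> P (b, (y, t)) c'.
    exists (W, [set i : R * ('rV[R]_n * R) | bc < i.1 /\ `|i.2.1 - x| < rc /\ 0 < i.2.2 < rc]).
      split => //=.
      exists ([set b | bc < b], [set p : 'rV[R]_n * R | `|p.1 - x| < rc /\ 0 < p.2 < rc]).
        split; first exact: (nbhs_left_gt bca).
        exists ([set y | `|y - x| < rc], [set t : R | 0 < t < rc]).
          split.
            by apply/nbhs_ballP; exists rc => //= y; rewrite -ball_normE /ball_ /= distrC.
          near=> t; apply/andP; split; near: t; [exact: nbhs_right_gt | exact: nbhs_right_lt].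
        by move=> [y t] [].
      by move=> [b [y t]] [].
    by move=> [c' [b [y t]]] /= [Wc' [bcb [yx ?]]]; apply: HP.
  case: (pselect (phi x = F c x)) => [act|inact].
    have Dl := Hneg c Cc act.
    have eps0 : 0 < (a + D c) / 2 by rewrite divr_gt0 //; lra.
    have [W nW [r r0 Hr]] := approx oV HC2 Hpc Vx Cc (-d) eps0.
    exists W => //; exists ((a - D c) / 2); first lra.
    exists r => // c' y t b Wc' yx /andP[t0 tr] bcb Cc' _ _ _.
    have := Hr c' y t Wc' Cc' yx; rewrite (gtr0_norm t0) => /(_ tr) /(le_trans (ler_norm _)).
    have -> : \sum_(i < n) (- d) 0 i * partial1 (F c) i x = - D c.
      by rewrite /D -sumrN; apply: eq_bigr => i _; rewrite mxE mulNr.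
    have : t * ((a - D c) / 2) <= t * b by rewrite ler_wpM2l // ltW.
    rewrite /=; move: (D c) => Dc H1 H2; nra.
  have [[c1 Cc1 act1] le] := Hact x Vx.
  have lt : phi x < F c x by rewrite lt_neqAle le // andbT; apply/eqP.
  have gam0 : 0 < (F c x - phi x) / 2 by rewrite divr_gt0 // subr_gt0.
  have := HC2 c1 Cc1 => -[_ _ cF1 _ _].
  move/subspace_continuousP: cF1 => /(_ x Vx) /cvgrPdist_lt /(_ _ gam0) H1.
  have H1' : nbhs x (fun y => V y -> `|F c1 x - F c1 y| < (F c x - phi x) / 2) := H1.
  move/subspace_continuousP: Hcont => /(_ (x, c) (conj Vx Cc)) /cvgrPdist_lt /(_ _ gam0) H2.
  have H2' : nbhs (x, c) (fun q => (V `*` C) q -> `|F c x - F q.2 q.1| < (F c x - phi x) / 2) := H2.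
  have [[A1 A2] /= [nA1 nA2] sA] := H2'.
  have : nbhs x (A1 `&` (fun y => V y -> `|F c1 x - F c1 y| < (F c x - phi x) / 2)) by apply: filterI.
  move/nbhs_ballP => [r /= r0 bA].
  exists A2 => //; exists 0 => //; exists r => // c' y t b A2c' yx _ _ Cc' act' Vy _.
  have yb : ball x r y by rewrite -ball_normE /ball_ /= distrC.
  have [Ay H1y] := bA y yb.
  have := sA (y, c') (conj Ay A2c') (conj Vy Cc'); rewrite ltr_norml => /andP[h1 h2].
  have := H1y Vy; rewrite ltr_norml => /andP[h3 h4].
  have := (Hact y Vy).2 c1 Cc1; rewrite /= in h1 h2 act' *.
  lra.
have := (compact_near_coveringP C).1 cC _ Fi P _ cov.
move=> [[B1 B2] /= [nB1 nB2] sB].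
have : (a^'-) (B1 `&` [set b | b < a]) by apply: filterI => //; exact: nbhs_left_lt.
move=> /filter_ex [b [B1b ba]].
have [rV rV0 HV] := near_line (- d) oV Vx.
pose U := B2 `&` [set p : 'rV[R]_n * R | `|p.1 - x| < rV /\ 0 < p.2 < rV].
have FU : filter_prod (nbhs x) ((0:R)^'+) U.
  apply: filterI => //.
  exists ([set y | `|y - x| < rV], [set t : R | 0 < t < rV]).
    split.
      by apply/nbhs_ballP; exists rV => //= y; rewrite -ball_normE /ball_ /= distrC.
    near=> t; apply/andP; split; near: t; [exact: nbhs_right_gt | exact: nbhs_right_lt].
  by move=> [y t] [].
have Hcl : (clarke_dd phi x (- d) <= b%:E)%E.
  rewrite /clarke_dd /limf_esup.
  apply: (@le_trans _ _ (ereal_sup ((fun p : 'rV[R]_n * R =>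
      ((phi (p.1 + p.2 *: - d) - phi p.1) / p.2)%:E) @` U))).
    by apply: ereal_inf_lbound; exists U.
  apply: ge_ereal_sup => _ [[y t] [B2yt [yx /andP[t0 tr]]] <-] /=.
  rewrite lee_fin ler_pdivrMr //.
  have Vy : V y by have := HV y 0 yx; rewrite normr0 scale0r addr0; apply.
  have Vyt : V (y + t *: - d) by apply: HV => //; rewrite gtr0_norm.
  have [[cy Ccy acty] ley] := Hact y Vy.
  have := sB (b, (y, t)) (conj B1b B2yt) cy Ccy Ccy acty Vy Vyt => /= H.
  have := (Hact _ Vyt).2 cy Ccy.
  rewrite acty; move=> H2; nra.
have := Hw (- d).
have -> : dotp w (- d) = a.
  by rewrite /a /dotp -sumrN; apply: eq_bigr => i _; rewrite mxE mulrN.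
move=> /le_trans /(_ Hcl); rewrite lee_fin => ab.
by move: (lt_le_trans ba ab); rewrite ltxx.
Unshelve. all: end_near.
Qed.
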